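(* Fix an iteration $k$, a current policy $\pi_k$, and $M_k:\mathcal Q\to(0,\infty)$. Assume $1-\rho^+(q)-\rho^-(q)>0$ and $1-\hat\rho^+(q)-\hat\rho^-(q)>0$ for all $q$. Define the corrected reward with estimated rates $\hat r(q,o,\xi)=\frac{\tilde r(q,o,\xi)-\hat\rho^+(q)}{1-\hat\rho^+(q)-\hat\rho^-(q)}$, the surrogate \[ \hat L_{\pi_k}(\pi(\cdot\mid q))=\frac{\mathbb E_{o\sim\pi(\cdot\mid q)}\mathbb E_{\xi}[\hat r(q,o,\xi)]-\mathbb E_{o\sim\pi_k(\cdot\mid q)}\mathbb E_{\xi}[\hat r(q,o,\xi)]}{M_k(q)}, \] and $M_k'(q)=\frac{1-\hat\rho^+(q)-\hat\rho^-(q)}{1-\rho^+(q)-\rho^-(q)}M_k(q)$. Then for every policy $\pi$, \[ \mathbb{E}_{q\sim\rho_{\mathcal Q}}\bigl[p_{\pi}(q)-p_{\pi_k}(q)\bigr] \ge \mathbb{E}_{q\sim\rho_{\mathcal Q}}\bigl[\hat L_{\pi_k}(\pi(\cdot\mid q))\bigr] -2\sqrt{\mathbb{E}_{q\sim\rho_{\mathcal Q}}\Bigl(\tfrac{1-M'_k(q)}{M'_k(q)}\Bigr)^2}\; \sqrt{\mathbb{E}_{q\sim\rho_{\mathcal Q}}\mathrm{TV}^2\bigl(\pi(\cdot\mid q)\,\|\,\pi_k(\cdot\mid q)\bigr)}. \]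
   Context: Setting: $\mathcal Q$ is a set of prompts with a probability distribution $\rho_{\mathcal Q}$; $\mathcal O$ is a countable set of responses; $r^*:\mathcal Q\times\mathcal O\to\{0,1\}$ is the true binary reward; a policy gives a distribution $\pi(\cdot\mid q)$ on $\mathcal O$; $p_\pi(q)=\mathbb E_{o\sim\pi(\cdot\mid q)}[r^*(q,o)]$. $\mathrm{TV}(P,Q)=\sup_A|P(A)-Q(A)|$. Noise model: true flip rates $\rho^+(q),\rho^-(q)\in[0,1]$; with $\xi\sim U[0,1]$ independent of $(q,o)$, $\tilde r(q,o,\xi)=(1-r^*(q,o))\mathbf 1_{\{\xi\le\rho^+(q)\}}+r^*(q,o)\mathbf 1_{\{\xi\le 1-\rho^-(q)\}}$. $\hat\rho^+(q),\hat\rho^-(q)$ are arbitrary (estimated) values used in place of the true flip rates; $\mathbb E_\xi$ is expectation over $\xi\sim U[0,1]$. *)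

(* Defs.v *)
From HB Require Import structures.
From mathcomp Require Import all_boot all_order all_algebra.
From mathcomp Require Import all_classical all_reals all_analysis.
Set Implicit Arguments. Unset Strict Implicit. Unset Printing Implicit Defensive.
Import Order.TTheory GRing.Theory Num.Theory.
Import numFieldNormedType.Exports.
Local Open Scope classical_set_scope.
Local Open Scope ring_scope.

Section NoisyRL.
Variables (R : realType) (Q : Type) (O : countType).

Definition is_policy (pi : Q -> O -> R) : Prop :=
  forall q, (forall o, 0 <= pi q o) /\ (\esum_(o in [set: O]) (pi q o)%:E = 1)%E.

Definition Eo (p : O -> R) (f : O -> R) : R :=
  fine (\esum_(o in [set: O]) (fun o => (p o * f o)%:E)^\+ o)%E
  - fine (\esum_(o in [set: O]) (fun o => (p o * f o)%:E)^\- o)%E.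

Definition pmass (p : O -> R) (A : set O) : R :=
  fine (\esum_(o in A) (p o)%:E)%E.

Definition TV (p p' : O -> R) : R :=
  sup [set `|pmass p A - pmass p' A| | A in [set: set O]].

Definition Exi (f : R -> R) : R :=
  fine (\int[@lebesgue_measure R]_(xi in `[0%R, 1%R]) (f xi)%:E)%E.

Definition p_pol (rstar : Q -> O -> bool) (pi : Q -> O -> R) (q : Q) : R :=
  Eo (pi q) (fun o => (rstar q o)%:R).

Definition rtilde (rstar : Q -> O -> bool) (rhop rhom : Q -> R)
  (q : Q) (o : O) (xi : R) : R :=
  (1 - (rstar q o)%:R) * (if xi <= rhop q then 1 else 0)
  + (rstar q o)%:R * (if xi <= 1 - rhom q then 1 else 0).

Definition rhat (rstar : Q -> O -> bool) (rhop rhom hrhop hrhom : Q -> R)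
  (q : Q) (o : O) (xi : R) : R :=
  (rtilde rstar rhop rhom q o xi - hrhop q) / (1 - hrhop q - hrhom q).

Definition Lhat (rstar : Q -> O -> bool) (rhop rhom hrhop hrhom : Q -> R)
  (Mk : Q -> R) (pik pi : Q -> O -> R) (q : Q) : R :=
  (Eo (pi q) (fun o => Exi (rhat rstar rhop rhom hrhop hrhom q o))
   - Eo (pik q) (fun o => Exi (rhat rstar rhop rhom hrhop hrhom q o))) / Mk q.

Definition Mk' (rhop rhom hrhop hrhom Mk : Q -> R) (q : Q) : R :=
  (1 - hrhop q - hrhom q) / (1 - rhop q - rhom q) * Mk q.

End NoisyRL.

(* Main.v *)
From HB Require Import structures.
From mathcomp Require Import all_boot all_order all_algebra.
From mathcomp Require Import all_classical all_reals all_analysis.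
From mathcomp Require Import measurable_realfun.
From mathcomp Require Import ring lra.
Require Import Defs.
Import Order.TTheory GRing.Theory Num.Theory.
Import numFieldNormedType.Exports.
Local Open Scope classical_set_scope.
Local Open Scope ring_scope.


Lemma esum_meas d (T : measurableType d) (R : realType) (O : countType)
  (F : T -> O -> \bar R) :
  (forall t o, (0 <= F t o)%E) -> (forall o, measurable_fun [set: T] (F^~ o)) ->
  measurable_fun [set: T] (fun t => \esum_(o in [set: O]) F t o)%E.
Proof.
move=> F0 mF.
pose b t j := if @pickle_inv O j is Some o then F t o else 0%E.
have b0 t j : (0 <= b t j)%E by rewrite /b; case: pickle_inv.
have E t : (\esum_(o in [set: O]) F t o = \sum_(j <oo) b t j)%E.
  rewrite nneseries_esumT // (@esumID R nat (range (@pickle O)) setT (b t)); last by move=> j _; exact: b0.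
  rewrite [X in (_ + X)%E](@esum1 _ _ _ (b t)) ?adde0; last first.
    move=> j [_ nj]; rewrite /b; case Ej: (@pickle_inv O j) => [x |] //.
    exfalso; move: nj; rewrite /setC /=; apply; exists x => //.
    by have := @pickle_invK O j; rewrite Ej.
  rewrite setTI esum_image; last by move=> x y _ _; exact: (pcan_inj (@pickleK_inv O)).
  by apply: eq_esum => o _; rewrite /b pickleK_inv.
rewrite (_ : (fun t => _) = fun t => \sum_(j <oo | j \in xpredT) b t j)%E; last first.
  by apply/funext => t; rewrite E.
apply: ge0_emeasurable_sum => // k _.
rewrite /b; case: pickle_inv => // o; exact: mF.
Qed.
Section esumaux.
Variables (R : realType) (O : countType).
Local Open Scope ereal_scope.

Lemma esum_series (F : O -> \bar R) : (forall o, 0 <= F o) ->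
  \esum_(o in [set: O]) F o =
  \sum_(j <oo) (if @pickle_inv O j is Some o then F o else 0).
Proof.
move=> F0.
pose b j := if @pickle_inv O j is Some o then F o else 0%E.
have b0 j : (0 <= b j)%E by rewrite /b; case: pickle_inv.
rewrite -/b nneseries_esumT // (@esumID R nat (range (@pickle O)) setT b); last by move=> j _; exact: b0.
rewrite [X in (_ + X)%E](@esum1 _ _ _ b) ?adde0; last first.
  move=> j [_ nj]; rewrite /b; case Ej: (@pickle_inv O j) => [x |] //.
  exfalso; move: nj; rewrite /setC /=; apply; exists x => //.
  by have := @pickle_invK O j; rewrite Ej.
rewrite setTI esum_image; last by move=> x y _ _; exact: (pcan_inj (@pickleK_inv O)).
by apply: eq_esum => o _; rewrite /b pickleK_inv.
Qed.

Lemma esumZ (S : set O) (c : R) (F : O -> \bar R) : (0 <= c)%R ->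
  (forall o, 0 <= F o) ->
  \esum_(o in S) (c%:E * F o) = c%:E * \esum_(o in S) F o.
Proof.
move=> c0 F0; rewrite !(esum_mkcond S).
rewrite [LHS]esum_series; last by move=> o; case: ifP => // _; rewrite mule_ge0.
rewrite [in RHS]esum_series; last by move=> o; case: ifP.
rewrite -nneseriesZl; last by move=> i _; case: pickle_inv => // o; case: ifP.
by apply: eq_eseriesr => i _; case: pickle_inv => // [x|]; [case: ifP => //|]; rewrite mule0.
Qed.

Lemma esum_mono (p : O -> R) (A : set O) : (forall o, 0 <= p o)%R ->
  \esum_(o in A) (p o)%:E <= \esum_(o in [set: O]) (p o)%:E.
Proof.
move=> p0; rewrite (esum_mkcond A); apply: le_esum => o _.
by case: ifP => // _; rewrite lee_fin.
Qed.

Variable p : O -> R.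
Hypothesis p0 : forall o, (0 <= p o)%R.
Hypothesis p1 : \esum_(o in [set: O]) (p o)%:E = 1.

Lemma esum_fin (A : set O) : \esum_(o in A) (p o)%:E \is a fin_num.
Proof.
have h0 : 0 <= \esum_(o in A) (p o)%:E by rewrite esum_ge0 // => o _; rewrite lee_fin.
rewrite ge0_fin_numE //.
by apply: (le_lt_trans (@esum_mono p A p0)); rewrite p1 ltry.
Qed.

Lemma pmass_ge0 A : (0 <= pmass p A)%R.
Proof. by rewrite /pmass fine_ge0 // esum_ge0 // => o _; rewrite lee_fin. Qed.

Lemma pmass_le1 A : (pmass p A <= 1)%R.
Proof.
rewrite /pmass -lee_fin fineK ?esum_fin //.
by rewrite -p1; exact: esum_mono.
Qed.

Lemma pmassC A : (pmass p A + pmass p (~` A) = 1)%R.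
Proof.
have := p1; rewrite (@esumID R O A setT); last by move=> o _; rewrite lee_fin.
rewrite !setTI /pmass => H.
by rewrite -fineD ?esum_fin // H.
Qed.

Lemma maxeM (x y : R) : (0 <= x)%R -> maxe (x * y)%:E 0 = (x * Num.max y 0)%:E.
Proof.
move=> x0; have [y0|y0] := leP 0%R y.
  rewrite (max_idPl _) ?(max_idPl y0) // lee_fin mulr_ge0 //.
rewrite (max_idPr _) ?(max_idPr (ltW y0)) ?mulr0 // lee_fin mulr_ge0_le0 // ltW.
  by []. by [].
Qed.

Lemma Eo_ite (r : O -> bool) (a b : R) :
  Eo p (fun o => if r o then b else a) =
  (a * (1 - pmass p [set o | r o]) + b * pmass p [set o | r o])%R.
Proof.
set B := [set o | r o].
have E (c : R -> R) : \esum_(o in [set: O]) (maxe (p o * c (if r o then b else a))%:E 0) =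
   (Num.max (c b) 0)%:E * (\esum_(o in B) (p o)%:E) +
   (Num.max (c a) 0)%:E * (\esum_(o in ~` B) (p o)%:E).
  rewrite (@esumID R O B setT); last by move=> o _; rewrite le_max lexx orbT.
  rewrite !setTI -!esumZ ?le_max ?lexx ?orbT //; try by move=> o; rewrite lee_fin.
  congr (_ + _); apply: eq_esum => o; rewrite /B /setC /=.
    by move=> ->; rewrite maxeM // -EFinM mulrC.
  by move=> /negP/negbTE ->; rewrite maxeM // -EFinM mulrC.
have P1 := E id; have P2 := E (fun x => - x)%R.
rewrite (_ : \esum_(o in [set: O]) maxe (p o * id (if r o then b else a))%:E 0 =
  \esum_(o in [set: O]) (fun o => (p o * (if r o then b else a))%:E)^\+ o) in P1; last first.
  by apply: eq_esum => o _; rewrite funeposE.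
rewrite (_ : \esum_(o in [set: O]) maxe (p o * - (if r o then b else a))%:E 0 =
  \esum_(o in [set: O]) (fun o => (p o * (if r o then b else a))%:E)^\- o) in P2; last first.
  by apply: eq_esum => o _; rewrite funenegE -EFinN -mulrN.
rewrite /Eo P1 P2.
have m1 := pmassC B.
rewrite !fineD ?fin_numM ?esum_fin // !fineM ?esum_fin //= -/(pmass p B) -/(pmass p (~` B)).
have mx (z : R) : (Num.max z 0 - Num.max (- z) 0 = z)%R.
  have [z0|z0] := leP 0%R z.
    by rewrite (max_idPr _) ?subr0 // oppr_le0.
  by rewrite (max_idPl _) ?sub0r ?opprK // oppr_ge0 ltW.
rewrite -m1.
have Ha := mx a; have Hb := mx b.
set pa := Num.max a 0%R in Ha *; set na := (Num.max (- a) 0)%R in Ha *.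
set pb := Num.max b 0%R in Hb *; set nb := (Num.max (- b) 0)%R in Hb *.
rewrite -Ha -Hb; ring.
Qed.

End esumaux.

Lemma Exi_step (R : realType) (t h D : R) : 0 <= t -> t <= 1 ->
  Exi (fun xi => ((if xi <= t then 1 else 0) - h) / D) = (t - h) / D.
Proof.
move=> t0 t1; rewrite /Exi.
have mf : measurable_fun [set: R] (fun xi : R => ((if xi <= t then 1 else 0) - h) / D).
  apply: measurable_funM => //; apply: measurable_funB => //.
  by apply: measurable_fun_ifT => //; apply: measurable_fun_ler.
have -> : (`[0%R, 1%R] = `[0%R, t] `|` `]t, 1%R])%classic.
  by apply: itv_bndbnd_setU; rewrite bnd_simp.
rewrite integral_setU //; last 2 first.
  by apply: measurable_funTS; apply/measurable_EFinP.
  apply: lt_disjoint => x y; rewrite !in_itv /= => /andP[_ xt] /andP[ty _].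
  exact: le_lt_trans xt ty.
rewrite (eq_integral (fun _ => ((1 - h) / D)%:E)); last first.
  by move=> x; rewrite inE /= in_itv /= => /andP[_ ->].
rewrite [X in (_ + X)%E](eq_integral (fun _ => ((0 - h) / D)%:E)); last first.
  by move=> x; rewrite inE /= in_itv /= => /andP[tx _]; rewrite leNgt tx.
rewrite !integral_cst //= !lebesgue_measure_itv /= !lte_fin.
have [ht0|ht0] := ltP 0 t; have [ht1|ht1] := ltP t 1.
- rewrite -!EFinB -!EFinM -!EFinD /=. ring.
- have -> : t = 1 by apply/eqP; rewrite eq_le t1 ht1.
  by rewrite -!EFinB mule0 adde0 -!EFinM /=; ring.
- have et : t = 0 by apply/eqP; rewrite eq_le t0 ht0.
  by rewrite mule0 add0e -!EFinB -!EFinM /= et; ring.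
- lra.
Qed.

Section CS.
Context d (T : measurableType d) (R : realType) (mu : {measure set T -> \bar R}).
Local Open Scope ereal_scope.

Lemma Lnorm2E (f : T -> R) :
  Lnorm mu 2%:E (EFin \o f) = sqrte (\int[mu]_x (f x ^+ 2)%:E).
Proof.
rewrite unlock /= -poweR12_sqrt; last by apply: integral_ge0 => x _; rewrite lee_fin sqr_ge0.
congr (_ `^ _); apply: eq_integral => x _.

by rewrite powR_mulrn // real_normK // num_real.
Qed.

Lemma CS (f g : T -> R) : measurable_fun [set: T] f -> measurable_fun [set: T] g ->
  \int[mu]_x (`|f x * g x|)%:E <=
  sqrte (\int[mu]_x (f x ^+ 2)%:E) * sqrte (\int[mu]_x (g x ^+ 2)%:E).
Proof.
move=> mf mg.
have h2 : (0 < 2 :> R)%R by [].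
have := @hoelder d T R mu f g 2 2 mf mg h2 h2.
rewrite !Lnorm2E Lnorm1 => H.
have e : (2^-1 + 2^-1 = 1 :> R)%R by field.
move: (H e); apply: le_trans; rewrite le_eqVlt; apply/orP; left; apply/eqP.
by apply: eq_integral => x _.
Qed.

Lemma le_integral_ge0 (f g : T -> \bar R) : (forall x, 0 <= f x) ->
  (forall x, f x <= g x) -> \int[mu]_x f x <= \int[mu]_x g x.
Proof.
move=> f0 fg.
have g0 x : 0 <= g x by exact: le_trans (f0 x) (fg x).
rewrite !ge0_integralTE //.
apply: le_ereal_sup => _ [h hf <-]; exists h => //= x.
exact: le_trans (hf x) (fg x).
Qed.

End CS.

Lemma measurable_inv_pos d (T : measurableType d) (R : realType) (f : T -> R) :
  (forall x, 0 < f x) -> measurable_fun [set: T] f ->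
  measurable_fun [set: T] (fun x => (f x)^-1).
Proof.
move=> f0 mf.
change (measurable_fun [set: T] (GRing.inv \o f)).
eapply (measurable_comp (F := (`]0%R, +oo[%classic : set R))).
- exact: measurable_itv.
- move=> _ [x _ <-]; rewrite /= in_itv /= andbT; exact: f0.
- apply: open_continuous_measurable_fun; first exact: interval_open.
  move=> x; rewrite inE /= in_itv /= andbT => x0; apply: inv_continuous.
  by rewrite gt_eqF.
- exact: mf.
Qed.


Theorem theorem6 (R : realType) (d : measure_display) (Q : measurableType d)
  (P : probability Q R) (O : countType)
  (rstar : Q -> O -> bool) (rhop rhom hrhop hrhom : Q -> R)
  (Mk : Q -> R) (pik : Q -> O -> R) :
  (forall q, 0 <= rhop q <= 1) -> (forall q, 0 <= rhom q <= 1) ->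
  (forall q, 0 < Mk q) ->
  (forall q, 0 < 1 - rhop q - rhom q) ->
  (forall q, 0 < 1 - hrhop q - hrhom q) ->
  is_policy pik ->
  (* measurability in q of all the data *)
  (forall o, measurable_fun [set: Q] (fun q => ((rstar q o)%:R : R))) ->
  measurable_fun [set: Q] rhop -> measurable_fun [set: Q] rhom ->
  measurable_fun [set: Q] hrhop -> measurable_fun [set: Q] hrhom ->
  measurable_fun [set: Q] Mk ->
  (forall o, measurable_fun [set: Q] (fun q => pik q o)) ->
  forall pi : Q -> O -> R, is_policy pi ->
  (forall o, measurable_fun [set: Q] (fun q => pi q o)) ->
  (\int[P]_q (p_pol rstar pi q - p_pol rstar pik q)%:E
   >= \int[P]_q (Lhat rstar rhop rhom hrhop hrhom Mk pik pi q)%:E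
      - 2%:E
        * sqrte (\int[P]_q
                   (((1 - Mk' rhop rhom hrhop hrhom Mk q)
                     / Mk' rhop rhom hrhop hrhom Mk q) ^+ 2)%:E)
        * sqrte (\int[P]_q ((TV (pi q) (pik q)) ^+ 2)%:E))%E.

Proof.
move=> hp hm Mk0 D0 Dh0 pikP mr mrp mrm mhp mhm mMk mpik pi piP mpi.
pose A q := [set o | rstar q o].
have ppol (p : Q -> O -> R) : is_policy p -> forall q, p_pol rstar p q = pmass (p q) (A q).
  move=> pp q; rewrite /p_pol.
  rewrite (_ : (fun o => _) = fun o => if rstar q o then 1 else 0); last first.
    by apply/funext => o; case: (rstar q o).
  by rewrite (@Eo_ite R O _ (proj1 (pp q)) (proj2 (pp q))) mul0r add0r mul1r.
pose Mp := Mk' rhop rhom hrhop hrhom Mk.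
have Mp0 q : 0 < Mp q by rewrite /Mp /Mk' mulr_gt0 // divr_gt0.
pose Dl q := p_pol rstar pi q - p_pol rstar pik q.
pose g q := (1 - Mp q) / Mp q.
have hL q : Lhat rstar rhop rhom hrhop hrhom Mk pik pi q = Dl q + Dl q * g q.
  have EX : (fun o => Exi (rhat rstar rhop rhom hrhop hrhom q o)) =
     fun o => if rstar q o then (1 - rhom q - hrhop q) / (1 - hrhop q - hrhom q)
              else (rhop q - hrhop q) / (1 - hrhop q - hrhom q).
    apply/funext => o.
    rewrite (_ : rhat rstar rhop rhom hrhop hrhom q o = fun xi =>
      ((if xi <= (if rstar q o then 1 - rhom q else rhop q) then 1 else 0) - hrhop q)
       / (1 - hrhop q - hrhom q)).
      have [hp0 hp1] := andP (hp q); have [hm0 hm1] := andP (hm q).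
      by case: (rstar q o); rewrite Exi_step //; lra.
    apply/funext => xi; rewrite /rhat /rtilde.
    by case: (rstar q o) => /=; ring.
  rewrite /Lhat EX (@Eo_ite R O _ (proj1 (piP q)) (proj2 (piP q))).
  rewrite (@Eo_ite R O _ (proj1 (pikP q)) (proj2 (pikP q))).
  rewrite /Dl /g !ppol // /Mp /Mk'.
  have := Mk0 q; have := D0 q; have := Dh0 q.
  move=> h1 h2 h3.
  by field; rewrite !gt_eqF.
have pm01 (p : Q -> O -> R) q B : is_policy p -> 0 <= pmass (p q) B <= 1.
  by move=> pp; rewrite (@pmass_ge0 R O _ (proj1 (pp q)) B)
     (@pmass_le1 R O _ (proj1 (pp q)) (proj2 (pp q)) B).
have hTV q : `|Dl q| <= TV (pi q) (pik q).
  rewrite /TV; apply: ub_le_sup.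
    exists 1 => _ [B _ <-].
    have := pm01 _ q B piP; have := pm01 _ q B pikP.
    move=> /andP[h1 h2] /andP[h3 h4]; rewrite ler_norml; apply/andP; split; lra.
  by exists (A q) => //; rewrite /Dl !ppol.
have hD1 q : `|Dl q| <= 1.
  rewrite /Dl !ppol //.
  have := pm01 _ q (A q) piP; have := pm01 _ q (A q) pikP.
  move=> /andP[h1 h2] /andP[h3 h4]; rewrite ler_norml; apply/andP; split; lra.
have mppol (p : Q -> O -> R) : is_policy p ->
    (forall o, measurable_fun [set: Q] (fun q => p q o)) ->
    measurable_fun [set: Q] (p_pol rstar p).
  move=> pp mp.
  have -> : p_pol rstar p = fun q =>
      fine (\esum_(o in [set: O]) (p q o * (rstar q o)%:R)%:E)%E.
    apply/funext => q; rewrite ppol // /pmass (esum_mkcond (A q)).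
    congr fine; apply: eq_esum => o _; rewrite /A.
    have -> : (o \in [set o0 | rstar q o0]) = rstar q o.
      by apply/idP/idP => [/set_mem //|h]; exact: mem_set.
    by case: (rstar q o); rewrite ?mulr1 ?mulr0.
  apply: measurableT_comp => //; apply: esum_meas.
    by move=> q o; rewrite lee_fin mulr_ge0 // (proj1 (pp q)).
  by move=> o; apply/measurable_EFinP; apply: measurable_funM.
have mDl : measurable_fun [set: Q] Dl.
  by apply: measurable_funB; apply: mppol.
have mMp : measurable_fun [set: Q] Mp.
  rewrite /Mp /Mk'; apply: measurable_funM => //; apply: measurable_funM.
    by apply: measurable_funB => //; apply: measurable_funB.
  apply: measurable_inv_pos => //.
  by apply: measurable_funB => //; apply: measurable_funB.
have mg : measurable_fun [set: Q] g.
  apply: measurable_funM; first exact: measurable_funB.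
  exact: measurable_inv_pos.
change (\int[P]_q (Lhat rstar rhop rhom hrhop hrhom Mk pik pi q)%:E -
   2%:E * sqrte (\int[P]_q (g q ^+ 2)%:E) *
   sqrte (\int[P]_q (TV (pi q) (pik q) ^+ 2)%:E) <= \int[P]_q (Dl q)%:E)%E.
set S1 := sqrte (\int[P]_q (g q ^+ 2)%:E).
set S2 := sqrte (\int[P]_q (TV (pi q) (pik q) ^+ 2)%:E).
have S10 : (0 <= S1)%E by exact: sqrte_ge0.
have S20 : (0 <= S2)%E by exact: sqrte_ge0.
have hJ : (\int[P]_q (`|Dl q * g q|)%:E <= S1 * S2)%E.
  apply: le_trans (@CS _ _ _ P _ _ mDl mg) _; rewrite muleC.
  apply: lee_pmul => //; first exact: sqrte_ge0.
  rewrite /S2 lee_sqrt; last by apply: integral_ge0 => q _; rewrite lee_fin sqr_ge0.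
  apply: le_integral_ge0 => q; first by rewrite lee_fin sqr_ge0.
  rewrite lee_fin -real_normK ?num_real // !expr2.
  by apply: ler_pM => //; exact: hTV.
have hC : (S1 * S2 <= 2%:E * S1 * S2)%E.
  rewrite -muleA; rewrite -[X in (X <= _)%E]mul1e.
  by apply: lee_wpmul2r; [exact: mule_ge0 | rewrite lee_fin ler1n].
have C0 : (0 <= 2%:E * S1 * S2)%E by rewrite !mule_ge0.
have hJC := le_trans hJ hC.
have J0 : (0 <= \int[P]_q (`|Dl q * g q|)%:E)%E.
  by apply: integral_ge0 => q _; rewrite lee_fin.
have intDl : P.-integrable [set: Q] (EFin \o Dl).
  apply/integrableP; split; first exact/measurable_EFinP.
  have h1 : (\int[P]_x `|(EFin \o Dl) x| <= \int[P]_q (cst 1%E) q)%E.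
    by apply: le_integral_ge0 => q //=; rewrite lee_fin ?hD1.
  apply: (le_lt_trans h1).
  rewrite integral_cst //; set m := (X in (1 * X)%E).
  have -> : m = 1%E by rewrite /m; exact: probability_setT.
  by rewrite mul1e ltry.
move: C0 hJC; set C := (2%:E * S1 * S2)%E; clearbody C.
case: C => [c||] // C0 hJC; last first.
  by rewrite /= addeNy leNye.
have intDg : P.-integrable [set: Q] (EFin \o (fun q => Dl q * g q)).
  apply/integrableP; split.
    by apply/measurable_EFinP; apply: measurable_funM.
  apply: (le_lt_trans hJC); exact: ltry.
rewrite (eq_integral (fun q => (Dl q)%:E + (Dl q * g q)%:E)%E); last first.
  by move=> q _; rewrite hL EFinD.
rewrite (integralD_EFin measurableT intDl intDg).
have fI : (\int[P]_q (Dl q)%:E \is a fin_num)%E.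
  by apply: integrable_fin_num.
have hDg : (\int[P]_q (Dl q * g q)%:E <= c%:E)%E.
  apply: le_trans hJC; apply: le_trans (lee_abs _) _.
  apply: le_trans (le_abse_integral _ _ _) _ => //.
    by apply/measurable_EFinP; apply: measurable_funM.
apply: le_trans (leeB (leeD2l _ hDg) (lexx c%:E)) _.
by rewrite addeK.
Qed.
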